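(* Let $|q|<1$ and $|qa|<|z|$, with parameters such that no denominator vanishes. Then $$f(a,k,z,q)=\sum_{n=1}^{\infty}\frac{k q^n}{1-kq^n}+\sum_{n=1}^{\infty}\frac{q^n a/z}{1-q^n a/z}-\sum_{n=1}^{\infty}\frac{a q^n}{1-aq^n}-\sum_{n=1}^{\infty}\frac{q^n k/z}{1-q^n k/z}.$$
   Context: Notation: $(x;q)_n=(1-x)(1-xq)\cdots(1-xq^{n-1})$, $(x_1,\dots,x_m;q)_n=(x_1;q)_n\cdots(x_m;q)_n$. Define $$f(a,k,z,q):=\sum_{n=1}^{\infty}\frac{(q\sqrt{k},-q\sqrt{k},k,z,k/a;q)_{n}}{(\sqrt{k},-\sqrt{k},qk,qk/z,qa;q)_{n}(1-q^n)}\left(\frac{qa}{z}\right)^{n}.$$ *)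

(* Defs.v *)
From Stdlib Require Import Reals.
Open Scope R_scope.

Record Cplx : Type := mkC { Re : R; Im : R }.

Definition Czero : Cplx := mkC 0 0.
Definition Cone : Cplx := mkC 1 0.
Definition Cadd (x y : Cplx) : Cplx := mkC (Re x + Re y) (Im x + Im y).
Definition Copp (x : Cplx) : Cplx := mkC (- Re x) (- Im x).
Definition Csub (x y : Cplx) : Cplx := Cadd x (Copp y).
Definition Cmul (x y : Cplx) : Cplx :=
  mkC (Re x * Re y - Im x * Im y) (Re x * Im y + Im x * Re y).
Definition Cinv (x : Cplx) : Cplx :=
  let d := Re x * Re x + Im x * Im x in mkC (Re x / d) (- Im x / d).
Definition Cdiv (x y : Cplx) : Cplx := Cmul x (Cinv y).
Fixpoint Cpow (x : Cplx) (n : nat) : Cplx :=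
  match n with O => Cone | S m => Cmul x (Cpow x m) end.
Definition Cnorm (x : Cplx) : R := sqrt (Re x * Re x + Im x * Im x).

Definition Cseq_cv (u : nat -> Cplx) (l : Cplx) : Prop :=
  forall eps : R, eps > 0 -> exists N : nat, forall n : nat, (n >= N)%nat ->
    Cnorm (Csub (u n) l) < eps.

(* partial sums  F 1 + ... + F N  (empty for N = 0) *)
Fixpoint Cpartial (F : nat -> Cplx) (N : nat) : Cplx :=
  match N with O => Czero | S M => Cadd (Cpartial F M) (F (S M)) end.

Definition Csum1 (F : nat -> Cplx) (L : Cplx) : Prop := Cseq_cv (Cpartial F) L.

Fixpoint Cpoch (x q : Cplx) (n : nat) : Cplx :=
  match n with
  | O => Cone
  | S m => Cmul (Cpoch x q m) (Csub Cone (Cmul x (Cpow q m)))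
  end.

(* n-th term of the series f(a,k,z,q); s plays the role of sqrt k (s*s = k) *)
Definition f_term (a k z q s : Cplx) (n : nat) : Cplx :=
  Cmul
    (Cdiv
      (Cmul (Cmul (Cmul (Cmul (Cpoch (Cmul q s) q n) (Cpoch (Copp (Cmul q s)) q n))
             (Cpoch k q n)) (Cpoch z q n)) (Cpoch (Cdiv k a) q n))
      (Cmul (Cmul (Cmul (Cmul (Cmul (Cpoch s q n) (Cpoch (Copp s) q n))
             (Cpoch (Cmul q k) q n)) (Cpoch (Cdiv (Cmul q k) z) q n))
             (Cpoch (Cmul q a) q n))
            (Csub Cone (Cpow q n))))
    (Cpow (Cdiv (Cmul q a) z) n).

Definition lam_term (x q : Cplx) (n : nat) : Cplx :=
  Cdiv (Cmul x (Cpow q n)) (Csub Cone (Cmul x (Cpow q n))).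

(* Main.v *)
From Stdlib Require Import Reals Lra Lia.
From Coquelicot Require Import Coquelicot.

Open Scope C_scope.

Ltac nzdiv z :=
  let HH := fresh in intro HH;
  match type of HH with ?A = _ =>
    match goal with
    | h : ?B <> _ |- _ => apply h; replace B with (A / z) by (field; auto); rewrite HH; field; auto
    end
  end.

Ltac pw := repeat (rewrite ?Cpow_S, ?Cpow_add_r).

Definition rr (a k z q : C) (j i : nat) : C :=
  (1 - z*q^i)*(1 - k/a*q^i)*(q*a/z*q^j) / ((1 - k/z*q^(S (j+i)))*(1 - a*q^(S (j+i)))).

Fixpoint GG (a k z q : C) (j m : nat) : C :=
  match m with O => 1 | S m' => GG a k z q j m' * rr a k z q j m' end.

Definition TT (a k z q : C) (j n : nat) : C :=
  (1 - k*q^j*(q^n*q^n))/((1 - k*q^j*q^n)*(1 - q^n)) * GG a k z q j n.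

Definition VV (a k z q : C) (j n : nat) : C :=
  GG a k z q j n * (1 - k*q^j*(q*a/z*q^j)*q^n)/((1 - q*a/z*q^j)*(1 - k*q^j*q^n)).

Definition good (a k z q : C) : Prop :=
  a <> 0 /\ z <> 0 /\ (forall p, 1 - k*q^(S p) <> 0) /\ (forall p, 1 - k/z*q^(S p) <> 0) /\
  (forall p, 1 - a*q^(S p) <> 0) /\ (forall p, 1 - a/z*q^(S p) <> 0) /\
  (forall n, 1 - q^(S n) <> 0).

Lemma GG_shift a k z q j n : good a k z q ->
  GG a k z q (S j) n = GG a k z q j n * q^n * ((1 - k/z*q^(S j))*(1 - a*q^(S j)))
     / ((1 - k/z*q^(S (j+n)))*(1 - a*q^(S (j+n)))).
Proof.
  intros (ha & hz & hk & hkz & hA & haz & hq).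
  induction n as [|n IH].
  - simpl GG. rewrite Nat.add_0_r. simpl Cpow.
    assert (h5 := hkz j). assert (h6 := hA j). revert h5 h6. pw. set (J := q^j). intros.
    field. repeat split; auto; nzdiv z.
  - simpl GG. rewrite IH. unfold rr.
    assert (h1 := hkz (j+n)%nat). assert (h2 := hA (j+n)%nat).
    assert (h3 := hkz (S j + n)%nat). assert (h4 := hA (S j+n)%nat).
    assert (h5 := hkz j). assert (h6 := hA j).
    replace (j + S n)%nat with (S j + n)%nat by lia.
    revert h1 h2 h3 h4 h5 h6. pw. set (J := q^j). set (X := q^n). intros.
    field. repeat split; auto; nzdiv z.
Qed.

Lemma TT_tele a k z q j n : good a k z q -> (1 <= n)%nat ->
  TT a k z q j n - TT a k z q (S j) n = VV a k z q j n - VV a k z q j (S n).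
Proof.
  intros G Hn. pose proof G as (ha & hz & hk & hkz & hA & haz & hq).
  unfold TT, VV. rewrite GG_shift by exact G. simpl GG. unfold rr.
  assert (h1 : 1 - q^n <> 0) by (destruct n; [lia| apply hq]).
  assert (h2 : 1 - k*q^(j+n) <> 0) by
    (destruct n;[lia| replace (j + S n)%nat with (S (j+n)) by lia; apply hk]).
  assert (h3 := hk (j + n)%nat).
  assert (h4 := haz j). assert (h5 := hkz (j+n)%nat). assert (h6 := hA (j+n)%nat).
  assert (h7 := hkz j). assert (h8 := hA j).
  revert h1 h2 h3 h4 h5 h6 h7 h8. pw. set (J := q^j). set (X := q^n). intros.
  field. repeat split; auto; first [nzdiv z | nzdiv (RtoC 1)].
Qed.

Definition lam (x q : C) (n : nat) : C := x*q^n/(1 - x*q^n).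

Lemma VV1 a k z q j : good a k z q ->
  VV a k z q j 1 = lam k q (S j) + lam (a/z) q (S j) - lam a q (S j) - lam (k/z) q (S j).
Proof.
  intros G. pose proof G as (ha & hz & hk & hkz & hA & haz & hq).
  unfold VV, lam. simpl GG. unfold rr.
  assert (h2 := hk j). assert (h4 := haz j). assert (h5 := hkz j). assert (h6 := hA j).
  rewrite Nat.add_0_r.
  revert h2 h4 h5 h6. pw. set (J := q^j). simpl Cpow. intros.
  field. repeat split; auto; first [nzdiv z | nzdiv (RtoC 1)].
Qed.

Open Scope C_scope.

Lemma Cmod_1m_ge (w : C) : (1 - Cmod w <= Cmod (1 - w))%R.
Proof.
  assert (H := Cmod_triangle (1 - w) w).
  replace (1 - w + w) with (RtoC 1) in H by ring. rewrite Cmod_1 in H. lra.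
Qed.

Lemma Cmod_minus_le (x w : C) : (Cmod (x - w) <= Cmod x + Cmod w)%R.
Proof.
  unfold Cminus. eapply Rle_trans; [apply Cmod_triangle|]. rewrite Cmod_opp. lra.
Qed.

Lemma Cmod_1m_le (w : C) : (Cmod (1 - w) <= 1 + Cmod w)%R.
Proof. eapply Rle_trans; [apply Cmod_minus_le|]. rewrite Cmod_1. lra. Qed.

Lemma Cmod_le_parts (x : C) : (Cmod x <= 2 * (Rabs (fst x) + Rabs (snd x)))%R.
Proof.
  eapply Rle_trans; [apply Cmod_2Rmax|].
  assert (sqrt 2 <= 2)%R.
  { rewrite <- (sqrt_square 2) at 2 by lra. apply sqrt_le_1_alt. lra. }
  assert (0 <= Rmax (Rabs (fst x)) (Rabs (snd x)))%R.
  { eapply Rle_trans; [apply Rabs_pos| apply Rmax_l]. }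
  assert (Rmax (Rabs (fst x)) (Rabs (snd x)) <= Rabs (fst x) + Rabs (snd x))%R.
  { apply Rmax_lub; generalize (Rabs_pos (fst x)) (Rabs_pos (snd x)); lra. }
  assert (0 <= sqrt 2)%R by apply sqrt_pos.
  nra.
Qed.

Lemma fin_lb (g : nat -> C) (P : nat) :
  (forall p, g p <> 0) -> exists d, (0 < d)%R /\ forall p, (p < P)%nat -> (d <= Cmod (g p))%R.
Proof.
  intros Hnz. induction P as [|P IH].
  - exists 1%R. split; [lra|]. intros; lia.
  - destruct IH as (d & hd & Hd).
    assert (hP : (0 < Cmod (g P))%R) by (apply Cmod_gt_0; auto).
    exists (Rmin d (Cmod (g P))). split. { apply Rmin_pos; auto. }
    intros p Hp. destruct (Nat.eq_dec p P) as [->|Hne].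
    + apply Rmin_r.
    + eapply Rle_trans; [apply Rmin_l| apply Hd; lia].
Qed.

Lemma unif_lb (g : nat -> C) (P : nat) :
  (forall p, g p <> 0) -> (forall p, (P <= p)%nat -> (/2 <= Cmod (g p))%R) ->
  exists d, (0 < d)%R /\ forall p, (d <= Cmod (g p))%R.
Proof.
  intros Hnz Hev. destruct (fin_lb g P Hnz) as (d & hd & Hd).
  exists (Rmin d (/2)). split. { apply Rmin_pos; lra. }
  intros p. destruct (Compare_dec.le_lt_dec P p).
  - eapply Rle_trans; [apply Rmin_r| apply Hev; auto].
  - eapply Rle_trans; [apply Rmin_l| apply Hd; auto].
Qed.

Lemma pow_small (x e : R) : (0 <= x < 1)%R -> (0 < e)%R ->
  exists N, forall n, (N <= n)%nat -> (x ^ n <= e)%R.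
Proof.
  intros Hx He. destruct (pow_lt_1_zero x ltac:(rewrite Rabs_pos_eq; lra) e He) as (N & HN).
  exists N. intros n Hn. specialize (HN n Hn). rewrite Rabs_pos_eq in HN by (apply pow_le; lra). lra.
Qed.

Lemma lb_geom (c q : C) : (Cmod q < 1)%R -> (forall p, 1 - c * q^(S p) <> 0) ->
  exists d, (0 < d)%R /\ forall p, (d <= Cmod (1 - c * q^(S p)))%R.
Proof.
  intros Hq Hnz.
  assert (Hc := Cmod_ge_0 c). assert (Hq0 := Cmod_ge_0 q).
  destruct (pow_small (Cmod q) (/ (2 * (Cmod c + 1))) ltac:(lra)) as (N & HN).
  { apply Rinv_0_lt_compat; lra. }
  apply (unif_lb (fun p => 1 - c * q^(S p)) N Hnz).
  intros p Hp. eapply Rle_trans; [|apply Cmod_1m_ge].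
  rewrite Cmod_mult, Cmod_pow.
  assert (H1 := HN (S p) ltac:(lia)).
  assert (H2 : (Cmod c * Cmod q ^ S p <= Cmod c * / (2 * (Cmod c + 1)))%R).
  { apply Rmult_le_compat_l; auto. }
  assert (Cmod c * / (2 * (Cmod c + 1)) <= /2)%R.
  { apply (Rmult_le_reg_r (2 * (Cmod c + 1))). lra.
    rewrite Rmult_assoc, Rinv_l by lra. nra. }
  lra.
Qed.

Lemma n_geom (r : R) : (0 <= r < 1)%R -> is_lim_seq (fun n => INR n * r ^ n)%R 0%R.
Proof.
  intros Hr. set (s := ((1 + r) / 2)%R).
  assert (Hs : (/2 <= s < 1)%R) by (unfold s; lra).
  set (a := (/ s - 1)%R).
  assert (Ha : (0 < a)%R).
  { unfold a. assert (1 < / s)%R. { rewrite <- Rinv_1. apply Rinv_lt_contravar; lra. } lra. }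
  apply is_lim_seq_le_le with (u := fun _ => 0%R) (w := fun n => (/ a * s ^ n)%R).
  - intros n. split.
    + apply Rmult_le_pos. apply pos_INR. apply pow_le; lra.
    + assert (B := Rle_pow_lin a n ltac:(lra)).
      replace (1 + a)%R with (/ s)%R in B by (unfold a; ring).
      rewrite pow_inv in B.
      assert (Hsn : (0 < s ^ n)%R) by (apply pow_lt; lra).
      assert (Hrs : (r ^ n <= s ^ n * s ^ n)%R).
      { rewrite <- Rpow_mult_distr. apply pow_incr. split; [lra|]. unfold s. nra. }
      assert (INR n * a <= / s ^ n)%R by lra.
      assert (INR n * s ^ n <= / a)%R.
      { apply (Rmult_le_reg_r a); auto. rewrite Rinv_l by lra.
        apply (Rmult_le_reg_r (/ s ^ n)). apply Rinv_0_lt_compat; auto.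
        replace (INR n * s ^ n * a * / s ^ n)%R with (INR n * a)%R by (field; lra). lra. }
      assert (0 <= INR n)%R by apply pos_INR.
      apply Rle_trans with (INR n * (s^n * s^n))%R.
      * apply Rmult_le_compat_l; auto.
      * replace (INR n * (s ^ n * s ^ n))%R with ((INR n * s ^ n) * s ^ n)%R by ring.
        apply Rmult_le_compat_r; lra.
  - apply is_lim_seq_const.
  - assert (H := is_lim_seq_scal_l (fun n => s^n)%R (/a)%R 0%R
       (is_lim_seq_geom s ltac:(rewrite Rabs_pos_eq; lra))).
    simpl in H. rewrite Rmult_0_r in H. exact H.
Qed.

Definition cv (u : nat -> C) (l : C) : Prop := forall eps : R, (eps > 0)%R ->
  exists N : nat, forall n : nat, (n >= N)%nat -> (Cmod (u n - l) < eps)%R.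

Fixpoint psum (F : nat -> C) (N : nat) : C :=
  match N with O => 0 | S M => psum F M + F (S M) end.

Lemma psum_fst F N : fst (psum F (S N)) = sum_f_R0 (fun i => fst (F (S i))) N.
Proof.
  induction N as [|N IH]; simpl.
  - ring.
  - simpl in IH. rewrite <- IH. reflexivity.
Qed.

Lemma psum_snd F N : snd (psum F (S N)) = sum_f_R0 (fun i => snd (F (S i))) N.
Proof.
  induction N as [|N IH]; simpl.
  - ring.
  - simpl in IH. rewrite <- IH. reflexivity.
Qed.

Lemma real_abs_cv (a : nat -> R) (M r : R) : (0 <= r < 1)%R ->
  (forall n, Rabs (a n) <= M * r ^ n)%R -> {l | Un_cv (sum_f_R0 a) l}.
Proof.
  intros Hr Ha. apply ex_series_Reals_0.
  apply (ex_series_le a (fun n => M * r ^ n)%R).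
  - intros n. apply Ha.
  - apply (ex_series_ext (fun n => scal M (r ^ n))%R). { intros; reflexivity. }
    apply (@ex_series_scal_l R_AbsRing R_NormedModule M (fun n => r^n)%R). apply ex_series_geom. rewrite Rabs_pos_eq; lra.
Qed.

Lemma abs_cv (F : nat -> C) (M r : R) : (0 <= r < 1)%R ->
  (forall n, Cmod (F (S n)) <= M * r ^ n)%R -> exists L, cv (psum F) L.
Proof.
  intros Hr HF.
  destruct (real_abs_cv (fun i => fst (F (S i))) M r Hr) as (l1 & H1).
  { intros n. eapply Rle_trans; [|apply HF].
    eapply Rle_trans; [|apply Rmax_Cmod]. apply Rmax_l. }
  destruct (real_abs_cv (fun i => snd (F (S i))) M r Hr) as (l2 & H2).
  { intros n. eapply Rle_trans; [|apply HF].
    eapply Rle_trans; [|apply Rmax_Cmod]. apply Rmax_r. }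
  exists (l1, l2). intros eps He.
  destruct (H1 (eps/5)%R ltac:(lra)) as (N1 & HN1).
  destruct (H2 (eps/5)%R ltac:(lra)) as (N2 & HN2).
  exists (S (max N1 N2)). intros n Hn. destruct n as [|m]; [lia|].
  eapply Rle_lt_trans; [apply Cmod_le_parts|].
  specialize (HN1 m ltac:(lia)). specialize (HN2 m ltac:(lia)).
  unfold R_dist in HN1, HN2. rewrite <- psum_fst in HN1. rewrite <- psum_snd in HN2.
  set (P := psum F (S m)) in *.
  unfold Cminus, Cplus, Copp. cbn [fst snd].
  replace (fst P + - l1)%R with (fst P - l1)%R by ring.
  replace (snd P + - l2)%R with (snd P - l2)%R by ring.
  lra.
Qed.

Lemma cv_plus u v l m : cv u l -> cv v m -> cv (fun n => u n + v n) (l + m).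
Proof.
  intros Hu Hv eps He.
  destruct (Hu (eps/2)%R ltac:(lra)) as (N1 & H1).
  destruct (Hv (eps/2)%R ltac:(lra)) as (N2 & H2).
  exists (max N1 N2). intros n Hn.
  replace (u n + v n - (l + m)) with ((u n - l) + (v n - m)) by ring.
  eapply Rle_lt_trans; [apply Cmod_triangle|].
  specialize (H1 n ltac:(lia)). specialize (H2 n ltac:(lia)). lra.
Qed.

Lemma cv_minus u v l m : cv u l -> cv v m -> cv (fun n => u n - v n) (l - m).
Proof.
  intros Hu Hv eps He.
  destruct (Hu (eps/2)%R ltac:(lra)) as (N1 & H1).
  destruct (Hv (eps/2)%R ltac:(lra)) as (N2 & H2).
  exists (max N1 N2). intros n Hn.
  replace (u n - v n - (l - m)) with ((u n - l) - (v n - m)) by ring.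
  eapply Rle_lt_trans; [apply Cmod_minus_le|].
  specialize (H1 n ltac:(lia)). specialize (H2 n ltac:(lia)). lra.
Qed.

Lemma cv_err u w e l : cv w l -> (forall n, Cmod (u n - w n) <= e n)%R ->
  is_lim_seq e 0%R -> cv u l.
Proof.
  intros Hw He Hl eps Heps.
  apply is_lim_seq_Reals in Hl.
  destruct (Hw (eps/2)%R ltac:(lra)) as (N1 & H1).
  destruct (Hl (eps/2)%R ltac:(lra)) as (N2 & H2).
  exists (max N1 N2). intros n Hn.
  replace (u n - l) with ((u n - w n) + (w n - l)) by ring.
  eapply Rle_lt_trans; [apply Cmod_triangle|].
  specialize (H1 n ltac:(lia)). specialize (H2 n ltac:(lia)).
  unfold R_dist in H2. rewrite Rminus_0_r in H2.
  specialize (He n). apply Rle_lt_trans with (Rabs (e n) + eps/2)%R.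
  2: lra.
  generalize (Rle_abs (e n)). lra.
Qed.

Open Scope C_scope.

Lemma P_tele a k z q j N : good a k z q ->
  psum (TT a k z q j) N - psum (TT a k z q (S j)) N = VV a k z q j 1 - VV a k z q j (S N).
Proof.
  intros G. induction N as [|N IH]; simpl.
  - ring.
  - replace (psum (TT a k z q j) N + TT a k z q j (S N) -
       (psum (TT a k z q (S j)) N + TT a k z q (S j) (S N)))
    with ((psum (TT a k z q j) N - psum (TT a k z q (S j)) N) +
          (TT a k z q j (S N) - TT a k z q (S j) (S N))) by ring.
    rewrite IH, TT_tele by (auto; lia). ring.
Qed.

Fixpoint ssum (f : nat -> C) (M : nat) : C :=
  match M with O => 0 | S M' => ssum f M' + f M' end.

Lemma P_tele2 a k z q N M : good a k z q ->
  psum (TT a k z q 0) N - psum (TT a k z q M) N =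
  ssum (fun j => VV a k z q j 1) M - ssum (fun j => VV a k z q j (S N)) M.
Proof.
  intros G. induction M as [|M IH]; simpl.
  - ring.
  - assert (H := P_tele a k z q M N G).
    replace (psum (TT a k z q 0) N - psum (TT a k z q (S M)) N) with
      ((psum (TT a k z q 0) N - psum (TT a k z q M) N) +
       (psum (TT a k z q M) N - psum (TT a k z q (S M)) N)) by ring.
    rewrite IH, H. ring.
Qed.

Lemma ssum_lam a k z q N : good a k z q ->
  ssum (fun j => VV a k z q j 1) N =
  psum (lam k q) N + psum (lam (a/z) q) N - psum (lam a q) N - psum (lam (k/z) q) N.
Proof.
  intros G. induction N as [|N IH]; simpl.
  - ring.
  - rewrite IH, VV1 by auto. ring.
Qed.

Lemma pow_le_mono (x : R) (m n : nat) : (0 <= x <= 1)%R -> (m <= n)%nat -> (x ^ n <= x ^ m)%R.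
Proof.
  intros Hx Hmn. replace n with (m + (n - m))%nat by lia. rewrite pow_add.
  assert (0 <= x ^ m)%R by (apply pow_le; lra).
  assert (x ^ (n - m) <= 1)%R by (rewrite <- (pow1 (n-m)); apply pow_incr; lra).
  assert (0 <= x ^ (n - m))%R by (apply pow_le; lra). nra.
Qed.

Lemma frac_le (x x' d d' : R) : (0 <= x <= x')%R -> (0 < d' <= d)%R -> (x / d <= x' / d')%R.
Proof.
  intros Hx Hd. unfold Rdiv. apply Rmult_le_compat; try lra.
  - left; apply Rinv_0_lt_compat; lra.
  - apply Rinv_le_contravar; lra.
Qed.

Lemma rr_mod a k z q j i : good a k z q ->
  Cmod (rr a k z q j i) = (Cmod (1 - z*q^i) * Cmod (1 - k/a*q^i) * (Cmod (q*a/z) * Cmod q ^ j)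
     / (Cmod (1 - k/z*q^(S (j+i))) * Cmod (1 - a*q^(S (j+i)))))%R.
Proof.
  intros (ha & hz & hk & hkz & hA & haz & hq). unfold rr.
  rewrite Cmod_div by (apply Cmult_neq_0; auto).
  rewrite !Cmod_mult, Cmod_pow. reflexivity.
Qed.

Lemma GG_bound a k z q (B r : R) (I0 : nat) :
  (0 < r <= B)%R -> (Cmod q <= 1)%R ->
  (forall i j, Cmod (rr a k z q j i) <= Cmod q ^ j * B)%R ->
  (forall i j, (I0 <= i)%nat -> Cmod (rr a k z q j i) <= Cmod q ^ j * r)%R ->
  forall j m, (Cmod (GG a k z q j m) <= (Cmod q ^ j) ^ m * (B / r) ^ I0 * r ^ m)%R.
Proof.
  intros Hr Hq Hall Hev j m.
  assert (H1 : (1 <= B / r)%R).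
  { apply (Rmult_le_reg_r r). lra. unfold Rdiv. rewrite Rmult_assoc, Rinv_l by lra. lra. }
  assert (Hq0 := Cmod_ge_0 q).
  assert (Hqj : (0 <= Cmod q ^ j)%R) by (apply pow_le; auto).
  enough (forall m, Cmod (GG a k z q j m) <= (Cmod q ^ j) ^ m * (B / r) ^ (min m I0) * r ^ m)%R.
  { eapply Rle_trans; [apply H|].
    apply Rmult_le_compat_r. apply pow_le; lra.
    apply Rmult_le_compat_l. apply pow_le; auto.
    apply Rle_pow; auto. lia. }
  clear m. intros m. induction m as [|m IH].
  - simpl. rewrite Cmod_1. lra.
  - simpl GG. rewrite Cmod_mult.
    assert (HB : (0 <= (B / r) ^ min m I0)%R) by (apply pow_le; lra).
    assert (Hqm : (0 <= (Cmod q ^ j) ^ m)%R) by (apply pow_le; auto).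
    assert (Hrm : (0 <= r ^ m)%R) by (apply pow_le; lra).
    destruct (Compare_dec.le_lt_dec I0 m) as [Hle|Hlt].
    + replace (min (S m) I0) with (min m I0) by lia.
      specialize (Hev m j Hle).
      apply Rle_trans with (((Cmod q ^ j) ^ m * (B / r) ^ min m I0 * r ^ m) * (Cmod q ^ j * r))%R.
      * apply Rmult_le_compat; auto; apply Cmod_ge_0.
      * simpl. lra.
    + replace (min (S m) I0) with (S (min m I0)) by lia.
      specialize (Hall m j).
      apply Rle_trans with (((Cmod q ^ j) ^ m * (B / r) ^ min m I0 * r ^ m) * (Cmod q ^ j * B))%R.
      * apply Rmult_le_compat; auto; apply Cmod_ge_0.
      * simpl. replace B with (B / r * r)%R at 2 by (field; lra). lra.
Qed.

Lemma rr_bound_all a k z q (d : R) : good a k z q -> (0 < d)%R -> (Cmod q <= 1)%R ->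
  (forall p, d <= Cmod (1 - k/z*q^(S p)))%R -> (forall p, d <= Cmod (1 - a*q^(S p)))%R ->
  forall i j, (Cmod (rr a k z q j i) <=
     Cmod q ^ j * ((1 + Cmod z) * (1 + Cmod (k/a)) * Cmod (q*a/z) / (d * d)))%R.
Proof.
  intros G Hd Hq H1 H2 i j. rewrite rr_mod by auto.
  assert (Hq0 := Cmod_ge_0 q).
  assert (Hqi : (Cmod q ^ i <= 1)%R) by (rewrite <- (pow1 i); apply pow_incr; lra).
  assert (Hqj : (0 <= Cmod q ^ j)%R) by (apply pow_le; auto).
  assert (E1 : (Cmod (1 - z * q^i) <= 1 + Cmod z)%R).
  { eapply Rle_trans; [apply Cmod_1m_le|]. rewrite Cmod_mult, Cmod_pow.
    assert (0 <= Cmod z)%R by apply Cmod_ge_0. nra. }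
  assert (E2 : (Cmod (1 - k/a * q^i) <= 1 + Cmod (k/a))%R).
  { eapply Rle_trans; [apply Cmod_1m_le|]. rewrite Cmod_mult, Cmod_pow.
    assert (0 <= Cmod (k/a))%R by apply Cmod_ge_0. nra. }
  assert (Hy := Cmod_ge_0 (q*a/z)).
  replace (Cmod q ^ j * ((1 + Cmod z) * (1 + Cmod (k / a)) * Cmod (q * a / z) / (d * d)))%R
    with ((1 + Cmod z) * (1 + Cmod (k / a)) * (Cmod (q * a / z) * Cmod q ^ j) / (d * d))%R
    by (field; lra).
  apply frac_le.
  - split.
    + apply Rmult_le_pos; [apply Rmult_le_pos|]; try apply Cmod_ge_0. nra.
    + apply Rmult_le_compat_r; [nra|]. apply Rmult_le_compat; auto; apply Cmod_ge_0.
  - split; [nra|]. apply Rmult_le_compat; try lra; auto.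
Qed.

Lemma rr_bound_ev a k z q : good a k z q -> (Cmod q < 1)%R -> (Cmod (q*a/z) < 1)%R ->
  exists I0, forall i j, (I0 <= i)%nat ->
    (Cmod (rr a k z q j i) <= Cmod q ^ j * ((1 + Cmod (q*a/z)) / 2))%R.
Proof.
  intros G Hq Hy. set (u := Cmod (q*a/z)). fold u in Hy.
  assert (Hu : (0 <= u)%R) by apply Cmod_ge_0.
  set (A := (1 + Cmod z + Cmod (k/a) + Cmod (k/z) + Cmod a)%R).
  assert (HA : (1 <= A)%R).
  { unfold A. generalize (Cmod_ge_0 z) (Cmod_ge_0 (k/a)) (Cmod_ge_0 (k/z)) (Cmod_ge_0 a). lra. }
  set (t := ((1 - u) / 10)%R).
  assert (Ht : (0 < t <= /10)%R) by (unfold t; lra).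
  assert (Hq0 := Cmod_ge_0 q).
  destruct (pow_small (Cmod q) (t / A) ltac:(lra)) as (I0 & HI).
  { apply Rdiv_lt_0_compat; lra. }
  exists I0. intros i j Hi. rewrite rr_mod by auto. fold u.
  assert (e1 : (Cmod q ^ i <= t / A)%R) by (apply HI; auto).
  assert (e2 : (Cmod q ^ S (j + i) <= t / A)%R).
  { eapply Rle_trans; [|apply (HI i Hi)]. apply pow_le_mono; [lra|lia]. }
  assert (p1 : (0 <= Cmod q ^ i)%R) by (apply pow_le; auto).
  assert (p2 : (0 <= Cmod q ^ S (j + i))%R) by (apply pow_le; auto).
  assert (Hqj : (0 <= Cmod q ^ j)%R) by (apply pow_le; auto).
  assert (tA : (A * (t / A) = t)%R) by (field; lra).
  assert (B1 : forall c : C, (Cmod c <= A)%R -> forall n, (Cmod q ^ n <= t / A)%R ->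
              (Cmod (1 - c * q^n) <= 1 + t)%R /\ (1 - t <= Cmod (1 - c * q^n))%R).
  { intros c Hc n Hn. assert (0 <= Cmod c)%R by apply Cmod_ge_0.
    assert (0 <= Cmod q ^ n)%R by (apply pow_le; auto).
    assert (Cmod c * Cmod q ^ n <= A * (t / A))%R by (apply Rmult_le_compat; auto).
    split.
    - eapply Rle_trans; [apply Cmod_1m_le|]. rewrite Cmod_mult, Cmod_pow. lra.
    - eapply Rle_trans; [|apply Cmod_1m_ge]. rewrite Cmod_mult, Cmod_pow. lra. }
  assert (cz : (Cmod z <= A)%R).
  { unfold A. generalize (Cmod_ge_0 z) (Cmod_ge_0 (k/a)) (Cmod_ge_0 (k/z)) (Cmod_ge_0 a). lra. }
  assert (cka : (Cmod (k/a) <= A)%R).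
  { unfold A. generalize (Cmod_ge_0 z) (Cmod_ge_0 (k/a)) (Cmod_ge_0 (k/z)) (Cmod_ge_0 a). lra. }
  assert (ckz : (Cmod (k/z) <= A)%R).
  { unfold A. generalize (Cmod_ge_0 z) (Cmod_ge_0 (k/a)) (Cmod_ge_0 (k/z)) (Cmod_ge_0 a). lra. }
  assert (ca : (Cmod a <= A)%R).
  { unfold A. generalize (Cmod_ge_0 z) (Cmod_ge_0 (k/a)) (Cmod_ge_0 (k/z)) (Cmod_ge_0 a). lra. }
  destruct (B1 z cz i e1) as (n1 & _).
  destruct (B1 (k/a) cka i e1) as (n2 & _).
  destruct (B1 (k/z) ckz _ e2) as (_ & d1).
  destruct (B1 a ca _ e2) as (_ & d2).
  apply Rle_trans with ((1 + t) * (1 + t) * (u * Cmod q ^ j) / ((1 - t) * (1 - t)))%R.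
  - apply frac_le.
    + split.
      * apply Rmult_le_pos; [apply Rmult_le_pos|]; try apply Cmod_ge_0. nra.
      * apply Rmult_le_compat_r; [nra|]. apply Rmult_le_compat; auto; apply Cmod_ge_0.
    + split; [nra|]. apply Rmult_le_compat; lra.
  - replace ((1 + t) * (1 + t) * (u * Cmod q ^ j) / ((1 - t) * (1 - t)))%R
      with (Cmod q ^ j * (u * (1 + t) * (1 + t) / ((1 - t) * (1 - t))))%R by (field; lra).
    apply Rmult_le_compat_l; auto.
    apply (Rmult_le_reg_r ((1 - t) * (1 - t))). nra.
    unfold Rdiv. rewrite Rmult_assoc, Rinv_l by nra.
    unfold t. nra.
Qed.

Lemma psum_bound (F : nat -> C) (M : R) N :
  (forall n, (1 <= n <= N)%nat -> Cmod (F n) <= M)%R -> (Cmod (psum F N) <= INR N * M)%R.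
Proof.
  induction N as [|N IH]; intros H.
  - simpl. rewrite Cmod_0. lra.
  - simpl psum. eapply Rle_trans; [apply Cmod_triangle|].
    rewrite S_INR. assert (H1 := IH ltac:(intros; apply H; lia)).
    assert (H2 := H (S N) ltac:(lia)). lra.
Qed.

Lemma ssum_bound (f : nat -> C) (M : R) N :
  (forall j, (j < N)%nat -> Cmod (f j) <= M)%R -> (Cmod (ssum f N) <= INR N * M)%R.
Proof.
  induction N as [|N IH]; intros H.
  - simpl. rewrite Cmod_0. lra.
  - simpl ssum. eapply Rle_trans; [apply Cmod_triangle|].
    rewrite S_INR. assert (H1 := IH ltac:(intros; apply H; lia)).
    assert (H2 := H N ltac:(lia)). lra.
Qed.

Lemma lam_cv (x q : C) (d : R) : (Cmod q < 1)%R -> (0 < d)%R ->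
  (forall p, d <= Cmod (1 - x * q^(S p)))%R -> exists L, cv (psum (lam x q)) L.
Proof.
  intros Hq Hd H. assert (Hq0 := Cmod_ge_0 q).
  apply (abs_cv _ (Cmod x * Cmod q / d)%R (Cmod q)). { lra. }
  intros n. unfold lam.
  assert (Hnz : 1 - x * q^(S n) <> 0).
  { intro E. specialize (H n). rewrite E, Cmod_0 in H. lra. }
  rewrite Cmod_div by auto. rewrite Cmod_mult, Cmod_pow. simpl pow.
  replace (Cmod x * Cmod q / d * Cmod q ^ n)%R with (Cmod x * (Cmod q * Cmod q ^ n) / d)%R
    by (field; lra).
  apply frac_le; auto. split; [|lra].
  apply Rmult_le_pos; [apply Cmod_ge_0|]. apply Rmult_le_pos; auto. apply pow_le; auto.
Qed.

Theorem main_C a k z q : good a k z q -> (Cmod q < 1)%R -> (Cmod (q*a/z) < 1)%R ->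
  exists L1 L2 L3 L4, cv (psum (lam k q)) L1 /\ cv (psum (lam (a/z) q)) L2 /\
    cv (psum (lam a q)) L3 /\ cv (psum (lam (k/z) q)) L4 /\
    cv (psum (TT a k z q 0)) (L1 + L2 - L3 - L4).
Proof.
  intros G Hq Hy. pose proof G as (ha & hz & hk & hkz & hA & haz & hq).
  assert (Hq0 := Cmod_ge_0 q).
  destruct (lb_geom k q Hq hk) as (d1 & Hd1 & D1).
  destruct (lb_geom (k/z) q Hq hkz) as (d2 & Hd2 & D2).
  destruct (lb_geom a q Hq hA) as (d3 & Hd3 & D3).
  destruct (lb_geom (a/z) q Hq haz) as (d4 & Hd4 & D4).
  set (d := Rmin (Rmin (Rmin d1 d2) (Rmin d3 d4)) (1 - Cmod q)).
  assert (Hd : (0 < d)%R).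
  { unfold d. repeat apply Rmin_pos; lra. }
  assert (dle : (d <= d1 /\ d <= d2 /\ d <= d3 /\ d <= d4 /\ d <= 1 - Cmod q)%R).
  { unfold d.
    generalize (Rmin_l (Rmin (Rmin d1 d2) (Rmin d3 d4)) (1 - Cmod q))
      (Rmin_r (Rmin (Rmin d1 d2) (Rmin d3 d4)) (1 - Cmod q))
      (Rmin_l (Rmin d1 d2) (Rmin d3 d4)) (Rmin_r (Rmin d1 d2) (Rmin d3 d4))
      (Rmin_l d1 d2) (Rmin_r d1 d2) (Rmin_l d3 d4) (Rmin_r d3 d4). lra. }
  destruct dle as (e1 & e2 & e3 & e4 & e5).
  assert (K1 : forall p, (d <= Cmod (1 - k * q^(S p)))%R) by (intros p; apply Rle_trans with d1; [exact e1| apply D1]).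
  assert (K2 : forall p, (d <= Cmod (1 - k/z * q^(S p)))%R) by (intros p; apply Rle_trans with d2; [exact e2| apply D2]).
  assert (K3 : forall p, (d <= Cmod (1 - a * q^(S p)))%R) by (intros p; apply Rle_trans with d3; [exact e3| apply D3]).
  assert (K4 : forall p, (d <= Cmod (1 - a/z * q^(S p)))%R) by (intros p; apply Rle_trans with d4; [exact e4| apply D4]).
  assert (K5 : forall n, (1 <= n)%nat -> (d <= Cmod (1 - q^n))%R).
  { intros n Hn. eapply Rle_trans; [|apply Cmod_1m_ge]. rewrite Cmod_pow.
    assert (Cmod q ^ n <= Cmod q ^ 1)%R by (apply pow_le_mono; [lra|lia]). simpl in H. lra. }
  destruct (lam_cv k q d Hq Hd K1) as (L1 & C1).
  destruct (lam_cv (a/z) q d Hq Hd K4) as (L2 & C2).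
  destruct (lam_cv a q d Hq Hd K3) as (L3 & C3).
  destruct (lam_cv (k/z) q d Hq Hd K2) as (L4 & C4).
  exists L1, L2, L3, L4. split; [auto|split; [auto|split; [auto|split; [auto|]]]].
  set (u := Cmod (q*a/z)) in *. assert (Hu : (0 <= u)%R) by apply Cmod_ge_0.
  set (r := ((1 + u) / 2)%R).
  set (B := ((1 + Cmod z) * (1 + Cmod (k/a)) * u / (d * d))%R).
  set (B' := Rmax B r).
  destruct (rr_bound_ev a k z q G Hq Hy) as (I0 & Hev).
  assert (Hall : forall i j, (Cmod (rr a k z q j i) <= Cmod q ^ j * B')%R).
  { intros i j. eapply Rle_trans. apply (rr_bound_all a k z q d G Hd ltac:(lra) K2 K3).
    apply Rmult_le_compat_l. apply pow_le; auto. apply Rmax_l. }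
  assert (Hr : (0 < r <= B')%R) by (split; [unfold r; lra| apply Rmax_r]).
  assert (HGG := GG_bound a k z q B' r I0 Hr ltac:(lra) Hall
                 ltac:(intros i j Hi; apply Hev; auto)).
  set (K := ((B' / r) ^ I0)%R) in *.
  assert (HK : (0 <= K)%R).
  { unfold K. apply pow_le. apply Rlt_le, Rdiv_lt_0_compat; lra. }
  assert (r1 : (r < 1)%R) by (unfold r; lra).
  assert (HT : forall N n, (1 <= n)%nat ->
     (Cmod (TT a k z q N n) <= (1 + Cmod k) / (d * d) * K * Cmod q ^ N)%R).
  { intros N n Hn. unfold TT.
    assert (yN : exists n', n = S n' /\ k * q^N * q^n = k * q^(S (N + n'))).
    { destruct n as [|n']; [lia|]. exists n'. split; auto.
      rewrite (Cpow_S q (N + n')), Cpow_add_r, Cpow_S. ring. }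
    destruct yN as (n' & En & yN).
    assert (n1 : 1 - k * q^N * q^n <> 0) by (rewrite yN; apply hk).
    assert (n2 : 1 - q^n <> 0) by (destruct n; [lia| apply hq]).
    rewrite Cmod_mult, Cmod_div by (apply Cmult_neq_0; auto).
    assert (a1 : (Cmod (1 - k * q ^ N * (q ^ n * q ^ n)) <= 1 + Cmod k)%R).
    { eapply Rle_trans; [apply Cmod_1m_le|]. rewrite !Cmod_mult, !Cmod_pow.
      assert (Cmod q ^ N <= 1)%R by (rewrite <- (pow1 N); apply pow_incr; lra).
      assert (Cmod q ^ n <= 1)%R by (rewrite <- (pow1 n); apply pow_incr; lra).
      assert (0 <= Cmod q ^ N)%R by (apply pow_le; lra).
      assert (0 <= Cmod q ^ n)%R by (apply pow_le; lra).
      assert (0 <= Cmod k)%R by apply Cmod_ge_0.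
      assert (Cmod q ^ n * Cmod q ^ n <= 1)%R by nra.
      assert (Cmod q ^ N * (Cmod q ^ n * Cmod q ^ n) <= 1)%R by nra. nra. }
    assert (a2 : (d <= Cmod (1 - k * q ^ N * q ^ n))%R).
    { rewrite yN. apply K1. }
    assert (a3 : (d <= Cmod (1 - q ^ n))%R) by (apply K5; auto).
    assert (a4 : (Cmod (GG a k z q N n) <= K * Cmod q ^ N)%R).
    { eapply Rle_trans; [apply HGG|].
      assert (x1 : ((Cmod q ^ N) ^ n <= Cmod q ^ N)%R).
      { replace (Cmod q ^ N)%R with ((Cmod q ^ N) ^ 1)%R at 2 by ring.
        apply pow_le_mono; [|lia]. split; [apply pow_le; lra|].
        rewrite <- (pow1 N); apply pow_incr; lra. }
      assert (x2 : (r ^ n <= 1)%R) by (rewrite <- (pow1 n); apply pow_incr; lra).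
      assert (0 <= (Cmod q ^ N) ^ n)%R by (apply pow_le; apply pow_le; lra).
      assert (0 <= r ^ n)%R by (apply pow_le; lra).
      assert (0 <= Cmod q ^ N)%R by (apply pow_le; lra).
      apply Rle_trans with ((Cmod q ^ N) ^ n * K * 1)%R.
      - apply Rmult_le_compat_l; [apply Rmult_le_pos|]; auto.
      - rewrite Rmult_1_r, Rmult_comm. apply Rmult_le_compat_l; auto. }
    replace ((1 + Cmod k) / (d * d) * K * Cmod q ^ N)%R
      with ((1 + Cmod k) / (d * d) * (K * Cmod q ^ N))%R by ring.
    apply Rmult_le_compat; auto.
    - apply Rmult_le_pos; [apply Cmod_ge_0|]. left; apply Rinv_0_lt_compat.
      rewrite Cmod_mult. apply Rmult_lt_0_compat; lra.
    - apply Cmod_ge_0.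
    - rewrite Cmod_mult. apply frac_le; [split; [apply Cmod_ge_0|auto]|].
      split; [nra|]. apply Rmult_le_compat; lra. }
  assert (HV : forall j N,
     (Cmod (VV a k z q j (S N)) <= K * (1 + Cmod k * u) / (d * d) * r ^ N)%R).
  { intros j N. unfold VV.
    assert (y1 : q * a / z * q ^ j = a / z * q ^ (S j)) by (rewrite Cpow_S; field; auto).
    assert (y2 : k * q ^ j * q ^ (S N) = k * q ^ (S (j + N))).
    { rewrite (Cpow_S q (j + N)), Cpow_add_r, Cpow_S. ring. }
    assert (n1 : 1 - q * a / z * q ^ j <> 0) by (rewrite y1; apply haz).
    assert (n2 : 1 - k * q ^ j * q ^ (S N) <> 0) by (rewrite y2; apply hk).
    rewrite Cmod_div by (apply Cmult_neq_0; auto). rewrite Cmod_mult.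
    assert (a1 : (Cmod (1 - k * q ^ j * (q * a / z * q ^ j) * q ^ S N) <= 1 + Cmod k * u)%R).
    { eapply Rle_trans; [apply Cmod_1m_le|]. rewrite !Cmod_mult, !Cmod_pow. fold u.
      assert (Cmod q ^ j <= 1)%R by (rewrite <- (pow1 j); apply pow_incr; lra).
      assert (Cmod q ^ S N <= 1)%R by (rewrite <- (pow1 (S N)); apply pow_incr; lra).
      assert (0 <= Cmod q ^ j)%R by (apply pow_le; lra).
      assert (0 <= Cmod q ^ S N)%R by (apply pow_le; lra).
      assert (0 <= Cmod k)%R by apply Cmod_ge_0.
      assert (Cmod q ^ j * Cmod q ^ j <= 1)%R by nra.
      assert (X1 : (u * Cmod q ^ j <= u)%R) by nra.
      assert (X2 : (Cmod q ^ j * (u * Cmod q ^ j) <= u)%R) by nra.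
      assert (X3 : (Cmod q ^ j * (u * Cmod q ^ j) * Cmod q ^ S N <= u)%R).
      { assert (0 <= Cmod q ^ j * (u * Cmod q ^ j))%R by nra. nra. }
      assert (Cmod k * (Cmod q ^ j * (u * Cmod q ^ j) * Cmod q ^ S N) <= Cmod k * u)%R.
      { apply Rmult_le_compat_l; auto. }
      lra. }
    assert (a2 : (d <= Cmod (1 - q * a / z * q ^ j))%R) by (rewrite y1; apply K4).
    assert (a3 : (d <= Cmod (1 - k * q ^ j * q ^ S N))%R) by (rewrite y2; apply K1).
    assert (a4 : (Cmod (GG a k z q j (S N)) <= K * r ^ N)%R).
    { eapply Rle_trans; [apply HGG|].
      assert (x1 : ((Cmod q ^ j) ^ S N <= 1)%R).
      { rewrite <- (pow1 (S N)). apply pow_incr. split; [apply pow_le; lra|].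
        rewrite <- (pow1 j); apply pow_incr; lra. }
      assert (x2 : (r ^ S N <= r ^ N)%R) by (apply pow_le_mono; [lra|lia]).
      assert (0 <= (Cmod q ^ j) ^ S N)%R by (apply pow_le; apply pow_le; lra).
      assert (0 <= r ^ S N)%R by (apply pow_le; lra).
      assert (0 <= r ^ N)%R by (apply pow_le; lra).
      apply Rle_trans with (1 * K * r ^ N)%R.
      - apply Rmult_le_compat; auto. apply Rmult_le_pos; auto.
        apply Rmult_le_compat_r; auto.
      - lra. }
    replace (K * (1 + Cmod k * u) / (d * d) * r ^ N)%R
      with ((K * r ^ N) * ((1 + Cmod k * u) / (d * d)))%R by (field; lra).
    rewrite <- Rmult_div_assoc.
    apply Rmult_le_compat; auto.
    - apply Cmod_ge_0.
    - apply Rmult_le_pos; [apply Cmod_ge_0|]. left; apply Rinv_0_lt_compat.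
      rewrite Cmod_mult. apply Rmult_lt_0_compat; lra.
    - rewrite Cmod_mult. apply frac_le; [split; [apply Cmod_ge_0|auto]|].
      split; [nra|]. apply Rmult_le_compat; lra. }
  set (W := fun N => psum (lam k q) N + psum (lam (a/z) q) N - psum (lam a q) N
                      - psum (lam (k/z) q) N).
  assert (CW : cv W (L1 + L2 - L3 - L4)).
  { unfold W. apply cv_minus; [apply cv_minus; [apply cv_plus|]|]; auto. }
  set (c1 := ((1 + Cmod k) / (d * d) * K)%R).
  set (c2 := (K * (1 + Cmod k * u) / (d * d))%R).
  apply (cv_err _ W (fun N => INR N * c1 * Cmod q ^ N + INR N * c2 * r ^ N)%R); auto.
  - intros N.
    assert (E : psum (TT a k z q 0) N - W N =
              psum (TT a k z q N) N - ssum (fun j => VV a k z q j (S N)) N).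
    { unfold W. rewrite <- ssum_lam by auto.
      assert (H := P_tele2 a k z q N N G).
      replace (psum (TT a k z q N) N - ssum (fun j : nat => VV a k z q j (S N)) N) with
        (psum (TT a k z q 0) N - (psum (TT a k z q 0) N - psum (TT a k z q N) N)
           - ssum (fun j : nat => VV a k z q j (S N)) N) by ring.
      rewrite H. ring. }
    rewrite E. eapply Rle_trans; [apply Cmod_minus_le|].
    apply Rplus_le_compat.
    + replace (INR N * c1 * Cmod q ^ N)%R with (INR N * (c1 * Cmod q ^ N))%R by ring.
      apply psum_bound. intros n Hn. unfold c1. apply HT. lia.
    + replace (INR N * c2 * r ^ N)%R with (INR N * (c2 * r ^ N))%R by ring.
      apply ssum_bound. intros j Hj. unfold c2. apply HV.
  - assert (T1 := is_lim_seq_scal_l _ c1 0%R (n_geom (Cmod q) ltac:(lra))).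
    assert (T2 := is_lim_seq_scal_l _ c2 0%R (n_geom r ltac:(lra))).
    simpl in T1, T2. rewrite Rmult_0_r in T1, T2.
    assert (T := is_lim_seq_plus' _ _ 0%R 0%R T1 T2).
    rewrite Rplus_0_r in T.
    eapply is_lim_seq_ext; [|exact T]. intros N. simpl. ring.
Qed.


Fixpoint cpoch (x q : C) (n : nat) : C :=
  match n with O => 1%C | S m => (cpoch x q m * (1 - x * q^m))%C end.

Lemma cpoch_nz x q n : (forall i, 1 - x * q^i <> 0)%C -> cpoch x q n <> 0%C.
Proof.
  intros H. induction n as [|n IH]; simpl.
  - intro E. injection E. lra.
  - apply Cmult_neq_0; auto.
Qed.

Lemma R1 (s K Q : C) n : s * s = K ->
  (cpoch (Q*s) Q n * cpoch (-(Q*s)) Q n * (1 - K) =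
   (1 - K*(Q^n*Q^n)) * cpoch s Q n * cpoch (-s) Q n)%C.
Proof.
  intros HS. induction n as [|n IH]; simpl.
  - ring.
  - set (X := (Q^n)%C) in *.
    transitivity ((cpoch (Q*s) Q n * cpoch (-(Q*s)) Q n * (1 - K)) *
       ((1 - Q * s * X) * (1 - - (Q * s) * X)))%C. { ring. }
    rewrite IH. rewrite <- HS. ring.
Qed.

Lemma R2 (K Q : C) n :
  (cpoch K Q n * (1 - K * Q^n) = (1 - K) * cpoch (Q*K) Q n)%C.
Proof.
  induction n as [|n IH]; simpl.
  - ring.
  - transitivity ((cpoch K Q n * (1 - K * Q^n)) * (1 - K * (Q * Q^n)))%C. { ring. }
    rewrite IH. ring.
Qed.

Lemma R3 (A K Z Q : C) n : good A K Z Q ->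
  (GG A K Z Q 0 n * cpoch (Q*K/Z) Q n * cpoch (Q*A) Q n =
   cpoch Z Q n * cpoch (K/A) Q n * (Q*A/Z)^n)%C.
Proof.
  intros G. pose proof G as (ha & hz & hk & hkz & hA & haz & hq).
  induction n as [|n IH].
  - simpl. ring.
  - simpl GG. simpl cpoch. unfold rr.
    assert (h1 := hkz n). assert (h2 := hA n).
    transitivity ((GG A K Z Q 0 n * cpoch (Q * K / Z) Q n * cpoch (Q * A) Q n) *
      ((1 - Z * Q ^ n) * (1 - K / A * Q ^ n) * (Q * A / Z * Q ^ 0) /
       ((1 - K / Z * Q ^ S (0 + n)) * (1 - A * Q ^ S (0 + n)))) *
      ((1 - Q * K / Z * Q ^ n) * (1 - Q * A * Q ^ n)))%C. { ring. }
    rewrite IH. simpl Nat.add. revert h1 h2. pw. simpl Cpow. set (X := (Q^n)%C). intros.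
    field. repeat split; auto; first [nzdiv Z | nzdiv (RtoC 1)].
Qed.

Lemma fterm_C (A K Z Q s : C) n : good A K Z Q -> (s * s = K)%C ->
  (forall i, 1 - s * Q^i <> 0)%C -> (forall i, 1 - - s * Q^i <> 0)%C -> (1 <= n)%nat ->
  (cpoch (Q*s) Q n * cpoch (-(Q*s)) Q n * cpoch K Q n * cpoch Z Q n * cpoch (K/A) Q n /
   (cpoch s Q n * cpoch (-s) Q n * cpoch (Q*K) Q n * cpoch (Q*K/Z) Q n * cpoch (Q*A) Q n
    * (1 - Q^n)) * (Q*A/Z)^n = TT A K Z Q 0 n)%C.
Proof.
  intros G HS hs hms Hn. pose proof G as (ha & hz & hk & hkz & hA & haz & hq).
  assert (n1 := cpoch_nz s Q n hs).
  assert (n2 := cpoch_nz (-s) Q n hms).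
  assert (n3 : cpoch (Q*K) Q n <> 0%C).
  { apply cpoch_nz. intros i. replace (1 - Q*K*Q^i)%C with (1 - K*Q^(S i))%C
      by (rewrite Cpow_S; ring). apply hk. }
  assert (n4 : cpoch (Q*K/Z) Q n <> 0%C).
  { apply cpoch_nz. intros i. replace (1 - Q*K/Z*Q^i)%C with (1 - K/Z*Q^(S i))%C
      by (rewrite Cpow_S; field; auto). apply hkz. }
  assert (n5 : cpoch (Q*A) Q n <> 0%C).
  { apply cpoch_nz. intros i. replace (1 - Q*A*Q^i)%C with (1 - A*Q^(S i))%C
      by (rewrite Cpow_S; ring). apply hA. }
  assert (n6 : (1 - Q^n <> 0)%C) by (destruct n; [lia|apply hq]).
  assert (n7 : (1 - K * Q^n <> 0)%C) by (destruct n; [lia|apply hk]).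
  assert (n8 : (1 - K <> 0)%C).
  { rewrite <- HS. replace (1 - s*s)%C with ((1 - s*Q^0)*(1 - - s * Q^0))%C by (simpl; ring).
    apply Cmult_neq_0; auto. }
  unfold TT. simpl Cpow.
  assert (E1 := R1 s K Q n HS). assert (E2 := R2 K Q n). assert (E3 := R3 A K Z Q n G).
  set (P1 := cpoch (Q*s) Q n) in *. set (P2 := cpoch (-(Q*s)) Q n) in *.
  set (Pk := cpoch K Q n) in *. set (Pz := cpoch Z Q n) in *. set (Pka := cpoch (K/A) Q n) in *.
  set (Ps := cpoch s Q n) in *. set (Pms := cpoch (-s) Q n) in *.
  set (Pqk := cpoch (Q*K) Q n) in *. set (Pqkz := cpoch (Q*K/Z) Q n) in *.
  set (Pqa := cpoch (Q*A) Q n) in *. set (G0 := GG A K Z Q 0 n) in *.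
  set (X := (Q^n)%C) in *. set (Y := ((Q*A/Z)^n)%C) in *.
  transitivity ((P1 * P2 * (1 - K)) * (Pk * (1 - K * X)) * (Pz * Pka * Y) /
     ((1 - K) * (1 - K * X) * Ps * Pms * Pqk * Pqkz * Pqa * (1 - X)))%C.
  { field. repeat split; auto. }
  rewrite E1, E2, <- E3. field. repeat split; auto.
Qed.

Close Scope C_scope.
Require Import Defs.
Open Scope R_scope.

Definition toC (x : Cplx) : Complex.C := (Re x, Im x).

Lemma toC_add x y : toC (Cadd x y) = (toC x + toC y)%C.
Proof. reflexivity. Qed.
Lemma toC_mul x y : toC (Cmul x y) = (toC x * toC y)%C.
Proof. reflexivity. Qed.
Lemma toC_opp x : toC (Copp x) = (- toC x)%C.
Proof. reflexivity. Qed.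
Lemma toC_sub x y : toC (Csub x y) = (toC x - toC y)%C.
Proof. reflexivity. Qed.
Lemma toC_one : toC Cone = 1%C.
Proof. reflexivity. Qed.
Lemma toC_zero : toC Czero = 0%C.
Proof. reflexivity. Qed.
Lemma toC_inv x : toC (Defs.Cinv x) = Complex.Cinv (toC x).
Proof.
  unfold toC, Defs.Cinv, Complex.Cinv. simpl.
  replace (Re x * (Re x * 1) + Im x * (Im x * 1)) with (Re x * Re x + Im x * Im x) by ring. reflexivity.
Qed.
Lemma toC_div x y : toC (Defs.Cdiv x y) = (toC x / toC y)%C.
Proof. unfold Defs.Cdiv, Complex.Cdiv. rewrite toC_mul, toC_inv. reflexivity. Qed.
Lemma toC_pow x n : toC (Defs.Cpow x n) = (toC x ^ n)%C.
Proof. induction n as [|n IH]; simpl. reflexivity. rewrite toC_mul, IH. reflexivity. Qed.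
Lemma toC_poch x q n : toC (Cpoch x q n) = cpoch (toC x) (toC q) n.
Proof.
  induction n as [|n IH]; simpl. reflexivity.
  rewrite toC_mul, IH, toC_sub, toC_one, toC_mul, toC_pow. reflexivity.
Qed.
Lemma toC_norm x : Cnorm x = Cmod (toC x).
Proof.
  unfold Cnorm, Cmod, toC. simpl. f_equal. ring.
Qed.
Lemma toC_inj x y : toC x = toC y -> x = y.
Proof. destruct x, y. unfold toC. simpl. intros E. injection E. intros; subst; reflexivity. Qed.
Lemma toC_nz x : x <> Czero -> toC x <> 0%C.
Proof. intros H E. apply H. apply toC_inj. rewrite E. reflexivity. Qed.

Ltac toCs := repeat first [rewrite toC_add | rewrite toC_mul | rewrite toC_opp | rewrite toC_sub
  | rewrite toC_one | rewrite toC_zero | rewrite toC_div | rewrite toC_pow | rewrite toC_poch].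

Lemma cv_transport (F : nat -> Cplx) (G : nat -> Complex.C) l L :
  (forall n, (1 <= n)%nat -> toC (F n) = G n) -> toC l = L -> cv (psum G) L -> Csum1 F l.
Proof.
  intros HF Hl HG eps He. destruct (HG eps He) as (N & HN). exists N. intros n Hn.
  rewrite toC_norm, toC_sub, Hl.
  replace (toC (Cpartial F n)) with (psum G n). { apply HN; auto. }
  clear Hn HN. induction n as [|n IH]; simpl. reflexivity.
  rewrite toC_add, IH, HF by lia. reflexivity.
Qed.

Theorem lemma2p3 (a k z q s : Cplx)
  (hs : Cmul s s = k)
  (hq : Cnorm q < 1)
  (hqaz : Cnorm (Cmul q a) < Cnorm z)
  (ha : a <> Czero)
  (hden : forall n : nat,
     Csub Cone (Cmul s (Cpow q n)) <> Czero /\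
     Csub Cone (Cmul (Copp s) (Cpow q n)) <> Czero /\
     Csub Cone (Cmul k (Cpow q (S n))) <> Czero /\
     Csub Cone (Cmul (Cdiv k z) (Cpow q (S n))) <> Czero /\
     Csub Cone (Cmul a (Cpow q (S n))) <> Czero /\
     Csub Cone (Cmul (Cdiv a z) (Cpow q (S n))) <> Czero) :
  exists L1 L2 L3 L4 : Cplx,
    Csum1 (lam_term k q) L1 /\
    Csum1 (lam_term (Cdiv a z) q) L2 /\
    Csum1 (lam_term a q) L3 /\
    Csum1 (lam_term (Cdiv k z) q) L4 /\
    Csum1 (f_term a k z q s) (Csub (Csub (Cadd L1 L2) L3) L4).
Proof.
  rewrite toC_norm in hq. rewrite !toC_norm, toC_mul in hqaz.
  assert (hz : toC z <> 0%C).
  { intro E. rewrite E, Cmod_0 in hqaz. generalize (Cmod_ge_0 (toC q * toC a)). lra. }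
  assert (G : good (toC a) (toC k) (toC z) (toC q)).
  { repeat split.
    - apply toC_nz; auto.
    - auto.
    - intros p. destruct (hden p) as (_ & _ & h & _). apply toC_nz in h. revert h. toCs. auto.
    - intros p. destruct (hden p) as (_ & _ & _ & h & _). apply toC_nz in h. revert h. toCs. auto.
    - intros p. destruct (hden p) as (_ & _ & _ & _ & h & _). apply toC_nz in h. revert h. toCs. auto.
    - intros p. destruct (hden p) as (_ & _ & _ & _ & _ & h). apply toC_nz in h. revert h. toCs. auto.
    - intros n E. assert (E' : (toC q ^ S n = 1)%C).
      { replace (toC q ^ S n)%C with (1 - (1 - toC q ^ S n))%C by ring. rewrite E. ring. }
      apply (f_equal Cmod) in E'. rewrite Cmod_pow, Cmod_1 in E'.
      assert (Cmod (toC q) ^ S n <= Cmod (toC q) ^ 1)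
        by (apply pow_le_mono; [split; [apply Cmod_ge_0|lra]|lia]).
      assert (H1 : Cmod (toC q) ^ 1 = Cmod (toC q)) by ring. lra. }
  assert (Hy : Cmod (toC q * toC a / toC z) < 1).
  { rewrite Cmod_div by auto. apply (Rmult_lt_reg_r (Cmod (toC z))).
    { apply Cmod_gt_0; auto. }
    unfold Rdiv. rewrite Rmult_assoc, Rinv_l, Rmult_1_r, Rmult_1_l; auto.
    apply Rgt_not_eq. apply Cmod_gt_0; auto. }
  destruct (main_C _ _ _ _ G hq Hy) as (L1 & L2 & L3 & L4 & C1 & C2 & C3 & C4 & C5).
  set (fromC := fun c : Complex.C => mkC (fst c) (snd c)).
  assert (HfromC : forall c, toC (fromC c) = c) by (intros [x y]; reflexivity).
  exists (fromC L1), (fromC L2), (fromC L3), (fromC L4).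
  assert (Hlam : forall x n, toC (lam_term x q n) = lam (toC x) (toC q) n).
  { intros x n. unfold lam_term, lam. toCs. reflexivity. }
  split; [|split; [|split; [|split]]].
  - refine (cv_transport _ _ _ _ _ _ C1); [|apply HfromC].
    intros n _. rewrite Hlam. reflexivity.
  - refine (cv_transport _ _ _ _ _ _ C2); [|apply HfromC].
    intros n _. rewrite Hlam. toCs. reflexivity.
  - refine (cv_transport _ _ _ _ _ _ C3); [|apply HfromC].
    intros n _. rewrite Hlam. reflexivity.
  - refine (cv_transport _ _ _ _ _ _ C4); [|apply HfromC].
    intros n _. rewrite Hlam. toCs. reflexivity.
  - refine (cv_transport _ _ _ _ _ _ C5).
    + intros n Hn. unfold f_term. toCs. apply fterm_C; auto.
      * rewrite <- hs. toCs. reflexivity.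
      * intros i. destruct (hden i) as (h & _). apply toC_nz in h. revert h. toCs. auto.
      * intros i. destruct (hden i) as (_ & h & _). apply toC_nz in h. revert h. toCs. auto.
    + toCs. rewrite !HfromC. reflexivity.
Qed.
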